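(* Under the hypotheses of Theorem 1 (walk $\{S_n\}$, stationary scenery $\{\xi(k)\}$ independent of the walk, $n\mathbb{P}(\xi(0)>u_n)\to\tau\ge0$, conditions $D(u_n)$ and $D'(u_n)$ with sequences $(\alpha_{n,l})$, $(l_n)$, $(k_n)$), and with the blocks $B_j$, stripes $L_j$, $\mathcal{L}_n$ and $K_n$ defined in the context, for almost every realization of $\{S_n,n\in\mathbb{N}_+\}$ the following hold as $n\to\infty$: (i) $\mathbb{P}(M_{\mathcal{S}_n}\le u_n)-\mathbb{P}(M_{\mathcal{S}_n\setminus\mathcal{L}_n}\le u_n)\to0$; (ii) $\mathbb{P}(M_{\mathcal{S}_n\setminus\mathcal{L}_n}\le u_n)-\prod_{j\le K_n}\mathbb{P}(M_{B_j\setminus\mathcal{L}_n}\le u_n)\to0$; (iii) $\prod_{j\le K_n}\mathbb{P}(M_{B_j\setminus\mathcal{L}_n}\le u_n)-\prod_{j\le K_n}\mathbb{P}(M_{B_j}\le u_n)\to0$. All probabilities are with respect to the scenery, with the realization of the walk fixed.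
   Context: Setting: $\{X_k\}$ centered integer-valued i.i.d., in the domain of attraction of an $\alpha$-stable law with $\alpha\in(0,1)$, $S_n=X_1+\cdots+X_n$; $\{\xi(k),k\in\mathbb{Z}\}$ stationary real random variables independent of $\{X_k\}$; $n\mathbb{P}(\xi(0)>u_n)\to\tau\ge0$. Condition $D(u_n)$: with $F_{i_1,\ldots,i_p}(u)=\mathbb{P}(\xi(i_1)\le u,\ldots,\xi(i_p)\le u)$, there exist $(\alpha_{n,l})_{(n,l)\in\mathbb{N}^2}$ and positive integers $(l_n)$ with $\alpha_{n,l_n}\to0$, $l_n=o(n)$, such that $|F_{i_1,\ldots,i_p,j_1,\ldots,j_{p'}}(u_n)-F_{i_1,\ldots,i_p}(u_n)F_{j_1,\ldots,j_{p'}}(u_n)|\le\alpha_{n,l}$ whenever $i_1<\cdots<i_p<j_1<\cdots<j_{p'}$ and $j_1-i_p\ge l$, uniformly in $p,p'$. Condition $D'(u_n)$: there exist integers $(k_n)$ with $k_n\to\infty$, $\frac{n^2}{k_n}\alpha_{n,l_n}\to0$, $k_nl_n=o(n)$, and $n\sum_{j=1}^{\lfloor n/k_n\rfloor}\mathbb{P}(\xi(0)>u_n,\xi(j)>u_n)\to0$. Notation: for $B\subset\mathbb{Z}$, $M_B=\max_{k\in B}\xi(k)$ (with $M_\emptyset=-\infty$). For a fixed realization of the walk, $\mathcal{S}_n=\{S_1,\ldots,S_n\}$, $R_n=\#\mathcal{S}_n$, $r_n=\lfloor n/(k_n-1)\rfloor+1$, $K_n=\lfloor R_n/r_n\rfloor+1$.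 The blocks $B_1,\ldots,B_{K_n}$ are the unique subsets of $\mathcal{S}_n$ with $\bigcup_{j\le K_n}B_j=\mathcal{S}_n$, $\#B_i=r_n$ and $\max B_i<\min B_{i+1}$ for $i\le K_n-1$ (so $\#B_{K_n}=R_n-(K_n-1)r_n$ and $K_n\le k_n$). For $j\le K_n-1$, the stripe $L_j$ is the set of the $l_n$ largest elements of $B_j$; $L_{K_n}$ is the set of the $l_n$ largest elements of $B_{K_n}$ if $\#B_{K_n}\ge l_n$, and $L_{K_n}=\emptyset$ otherwise. $\mathcal{L}_n=\bigcup_{j\le K_n}L_j$. *)

(* Defs.v *)
From HB Require Import structures.
From mathcomp Require Import all_boot all_order all_algebra.
From mathcomp Require Import all_classical all_reals all_analysis.
Set Implicit Arguments. Unset Strict Implicit. Unset Printing Implicit Defensive.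
Import Order.TTheory GRing.Theory Num.Theory.
Import numFieldNormedType.Exports.
Local Open Scope classical_set_scope.
Local Open Scope ring_scope.

Section Defs.
Context (R : realType).

Definition prR d (T : measurableType d) (P : probability T R) (A : set T) : R :=
  fine (P A).

(** X k is X_{k+1}; S_n = X_1 + ... + X_n. *)
Definition walkS (T : Type) (X : nat -> T -> int) (n : nat) (w : T) : int :=
  \sum_(i < n) X i w.

Section Walk.
Context d (T : measurableType d) (P : probability T R).


(** i.i.d. integer-valued random variables (independence of discrete
    variables written through the point events {X_k = z}). *)
Definition iid_int (X : nat -> T -> int) : Prop :=
  [/\ (forall i, measurable_fun setT (fun w => (X i w)%:~R : R)),
      (forall i z, P [set w | X i w = z] = P [set w | X 0%N w = z]) &
      (forall (s : seq nat) (z : nat -> int), uniq s ->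
         prR P [set w | forall i, i \in s -> X i w = z i] =
         \prod_(i <- s) prR P [set w | X i w = z i])].

End Walk.

(** Characteristic function of the alpha-stable law S_alpha(sigma,beta,mu)
    (alpha <> 1), split into real and imaginary parts:
    phi(t) = exp(-sigma^alpha |t|^alpha (1 - i beta sgn(t) tan(pi alpha/2)) + i mu t). *)
Definition stable_cf_re (a sigma beta mu t : R) : R :=
  expR (- (sigma `^ a * `|t| `^ a)) *
  cos (mu * t + sigma `^ a * `|t| `^ a * beta * Num.sg t * tan (pi * a / 2)).
Definition stable_cf_im (a sigma beta mu t : R) : R :=
  expR (- (sigma `^ a * `|t| `^ a)) *
  sin (mu * t + sigma `^ a * `|t| `^ a * beta * Num.sg t * tan (pi * a / 2)).

Definition is_stable_law (a : R) (nu : probability R R) : Prop :=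
  exists sigma beta mu : R, [/\ 0 < sigma, -1 <= beta <= 1 &
    forall t : R,
      (\int[nu]_x (cos (t * x))%:E = (stable_cf_re a sigma beta mu t)%:E)%E /\
      (\int[nu]_x (sin (t * x))%:E = (stable_cf_im a sigma beta mu t)%:E)%E].

Definition cdf (nu : probability R R) (x : R) : R := fine (nu [set y | y <= x]).

Definition cvg_in_distr (F : nat -> R -> R) (nu : probability R R) : Prop :=
  forall x : R, {for x, continuous (cdf nu)} ->
    (fun n => F n x) @ \oo --> cdf nu x.

Definition domain_of_attraction d (T : measurableType d) (P : probability T R)
  (X : nat -> T -> int) (a : R) : Prop :=
  exists (an bn : nat -> R) (nu : probability R R),
    [/\ (forall n, 0 < an n), is_stable_law a nu &
        cvg_in_distr
          (fun n x => prR P [set w | ((walkS X n w)%:~R - bn n) / an n <= x]) nu].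

Section Scenery.
Context d (T : measurableType d) (P : probability T R).

(** Event {M_B <= u} for a finite set B of sites (M_emptyset = -oo). *)
Definition max_le (xi : int -> T -> R) (B : seq int) (u : R) : set T :=
  [set w | forall z, z \in B -> xi z w <= u].

Definition stationary (xi : int -> T -> R) : Prop :=
  forall (s : seq int) (A : int -> set R) (h : int),
    (forall z, measurable (A z)) ->
    P [set w | forall z, z \in s -> A z (xi z w)] =
    P [set w | forall z, z \in s -> A z (xi (z + h) w)].

Definition Fjoint (xi : int -> T -> R) (s : seq int) (u : R) : R :=
  prR P (max_le xi s u).

Definition cond_D (xi : int -> T -> R) (u : nat -> R)
    (alph : nat -> nat -> R) (l : nat -> nat) : Prop :=
  [/\ (fun n => alph n (l n)) @ \oo --> 0,
      (forall n, (0 < l n)%N),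
      (fun n => (l n)%:R / n%:R) @ \oo --> (0 : R) &
      forall (n lag : nat) (i j : seq int),
        i != [::] -> j != [::] ->
        sorted (fun x y : int => x < y) i -> sorted (fun x y : int => x < y) j ->
        last 0 i < head 0 j -> last 0 i + lag%:Z <= head 0 j ->
        `| Fjoint xi (i ++ j) (u n) - Fjoint xi i (u n) * Fjoint xi j (u n) |
          <= alph n lag].

Definition cond_D' (xi : int -> T -> R) (u : nat -> R)
    (alph : nat -> nat -> R) (l k : nat -> nat) : Prop :=
  [/\ (forall n, (0 < k n)%N),
      (forall M : nat, \forall n \near \oo, (M <= k n)%N),
      (fun n => n%:R ^+ 2 / (k n)%:R * alph n (l n)) @ \oo --> (0 : R),
      (fun n => (k n * l n)%:R / n%:R) @ \oo --> (0 : R) &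
      (fun n => n%:R * \sum_(1 <= j < (n %/ k n).+1)
          prR P [set w | u n < xi 0 w /\ u n < xi j%:Z w]) @ \oo --> (0 : R)].

End Scenery.

Section Blocks.
Context (T : Type).
Variables (X : nat -> T -> int) (k l : nat -> nat).

Definition range_seq (n : nat) (w : T) : seq int :=
  sort (fun x y : int => x <= y) (undup [seq walkS X m w | m <- iota 1 n]).

Definition rlen (n : nat) : nat := n %/ (k n).-1 + 1.

Definition Kn (n : nat) (w : T) : nat := size (range_seq n w) %/ rlen n + 1.

(** Block B_{j+1}, j = 0, ..., K_n - 1 (increasingly listed). *)
Definition block (n : nat) (w : T) (j : nat) : seq int :=
  take (rlen n) (drop (j * rlen n) (range_seq n w)).

(** Stripe L_{j+1}: the l_n largest elements of B_{j+1}; for the last block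
    it is empty when #B_{K_n} < l_n. *)
Definition stripe (n : nat) (w : T) (j : nat) : seq int :=
  let B := block n w j in
  if (j.+1 < Kn n w)%N || (l n <= size B)%N then drop (size B - l n) B else [::].

Definition stripes (n : nat) (w : T) : seq int :=
  flatten [seq stripe n w j | j <- iota 0 (Kn n w)].

End Blocks.

End Defs.

(* Main.v *)
Require Import Defs.
From HB Require Import structures.
From mathcomp Require Import all_boot all_order all_algebra.
From mathcomp Require Import all_classical all_reals all_analysis.
From mathcomp Require Import ring lra zify.
From Stdlib Require Import Lia.
Import Order.TTheory GRing.Theory Num.Theory.
Import numFieldNormedType.Exports.
Set Implicit Arguments. Unset Strict Implicit. Unset Printing Implicit Defensive.
Local Open Scope classical_set_scope.
Local Open Scope ring_scope.

Section H.
Context (R : realType) d (T : measurableType d) (P : probability T R).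

Lemma prR_ge0 A : 0 <= prR P A.
Proof. by rewrite /prR fine_ge0. Qed.

Lemma prR_fin A : measurable A -> P A = (prR P A)%:E.
Proof. by move=> mA; rewrite /prR fineK // fin_num_measure. Qed.

Lemma prR_le1 A : measurable A -> prR P A <= 1.
Proof. by move=> mA; rewrite -lee_fin -prR_fin // probability_le1. Qed.

Lemma prRT : prR P setT = 1.
Proof. by rewrite /prR probability_setT. Qed.

Lemma prR_DI A B : measurable A -> measurable B ->
  prR P A = prR P (A `\` B) + prR P (A `&` B).
Proof.
move=> mA mB; rewrite /prR -fineD; first by congr fine; exact: measureDI.
  by apply: fin_num_measure; exact: measurableD.
by apply: fin_num_measure; exact: measurableI.
Qed.

Lemma prR_le A B : measurable A -> measurable B -> A `<=` B ->
  prR P A <= prR P B.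
Proof.
by move=> mA mB AB; rewrite -lee_fin -!prR_fin // le_measure // inE.
Qed.
End H.
Section S.
Context (R : realType) d (T : measurableType d) (P : probability T R)
  (xi : int -> T -> R) (u : R).
Hypothesis mxi : forall z, measurable_fun setT (xi z).
Variable p : R.
Hypothesis hp : forall z, prR P [set w | u < xi z w] = p.

Lemma meas_le z : measurable [set w | xi z w <= u].
Proof.
have := mxi z measurableT (measurable_itv `] -oo, u]); rewrite setTI.
congr measurable; apply/seteqP; split => w /=; rewrite in_itv //=.
Qed.

Lemma meas_gt z : measurable [set w | u < xi z w].
Proof.
have := mxi z measurableT (measurable_itv `]u, +oo[); rewrite setTI.
congr measurable; apply/seteqP; split => w /=; rewrite in_itv /= andbT //.
Qed.

Lemma max_le_cons z s :
  max_le xi (z :: s) u = [set w | xi z w <= u] `&` max_le xi s u.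
Proof.
apply/seteqP; split => w /=.
  by move=> H; split; [apply: H; rewrite inE eqxx | move=> y ys; apply: H; rewrite inE ys orbT].
by move=> [H1 H2] y; rewrite inE => /orP[/eqP->//|]; exact: H2.
Qed.

Lemma max_le_nil : max_le xi [::] u = setT.
Proof. by apply/seteqP; split => w //= _ z; rewrite in_nil. Qed.

Lemma meas_max s : measurable (max_le xi s u).
Proof.
elim: s => [|z s IH]; first by rewrite max_le_nil.
by rewrite max_le_cons; apply: measurableI => //; exact: meas_le.
Qed.

Lemma max_le_eq s t : s =i t -> max_le xi s u = max_le xi t u.
Proof.
by move=> st; apply/seteqP; split => w /= H z zs; apply: H; rewrite ?st // -st.
Qed.

Lemma p_ge0 : 0 <= p.
Proof. by rewrite -(hp 0); exact: prR_ge0. Qed.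

Lemma lemB t a : 0 <= prR P (max_le xi a u) - prR P (max_le xi (t ++ a) u)
  <= (size t)%:R * p.
Proof.
elim: t => [|z t IH] /=; first by rewrite subrr mul0r lexx.
have E := prR_DI P (meas_max (t ++ a)) (meas_le z).
rewrite max_le_cons setIC.
have h1 : prR P (max_le xi (t ++ a) u `\` [set w | xi z w <= u]) <= p.
  rewrite -(hp z); apply: prR_le; first exact: measurableD (meas_max _) (meas_le _).
    exact: meas_gt.
  by move=> w [_ /= H]; rewrite ltNge; apply/negP.
have h0 := prR_ge0 P (max_le xi (t ++ a) u `\` [set w | xi z w <= u]).
move/andP: IH => [I1 I2].
rewrite -addn1 natrD mulrDl mul1r; apply/andP; split; lra.
Qed.

Lemma lemA (L s : seq int) : 0 <= prR P (max_le xi [seq z <- s | z \notin L] u)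
   - prR P (max_le xi s u) <= (count (mem L) s)%:R * p.
Proof.
rewrite [X in _ - prR P X](@max_le_eq s ([seq z <- s | z \in L] ++ [seq z <- s | z \notin L])).
  rewrite -size_filter; exact: lemB.
by move=> z; rewrite mem_cat !mem_filter; case: (z \in L); case: (z \in s).
Qed.

Lemma F01 s : 0 <= prR P (max_le xi s u) <= 1.
Proof. by rewrite prR_ge0 prR_le1 //; exact: meas_max. Qed.

End S.
Section Prod.
Context (R : realType).

Lemma prod01 (I : Type) (f : I -> R) (s : seq I) :
  (forall i, 0 <= f i <= 1) -> 0 <= \prod_(i <- s) f i <= 1.
Proof.
move=> hf; elim: s => [|a s IH]; first by rewrite big_nil ler01 lexx.
rewrite big_cons; move/andP: IH => [I1 I2]; have /andP[h1 h2] := hf a.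
apply/andP; split; nra.
Qed.

Lemma prod_diff (I : Type) (f g : I -> R) (s : seq I) :
  (forall i, 0 <= f i <= 1) -> (forall i, 0 <= g i <= 1) ->
  `|\prod_(i <- s) f i - \prod_(i <- s) g i| <= \sum_(i <- s) `|f i - g i|.
Proof.
move=> hf hg; elim: s => [|a s IH]; first by rewrite !big_nil subrr normr0.
rewrite !big_cons.
have /andP[A0 A1] := prod01 s hf.
have /andP[g0 g1] := hg a.
set A := \prod_(i <- s) f i in A0 A1 IH *.
set B := \prod_(i <- s) g i in IH *.
have -> : f a * A - g a * B = (f a - g a) * A + g a * (A - B) by ring.
apply: le_trans (ler_normD _ _) _; rewrite !normrM (ger0_norm A0) (ger0_norm g0).
have e1 := normr_ge0 (f a - g a); have e2 := normr_ge0 (A - B).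
nra.
Qed.
End Prod.

Fixpoint gapped (lag : int) (bs : seq (seq int)) : Prop :=
  match bs with
  | [::] => True
  | b :: bs' => (forall x y, x \in b -> y \in flatten bs' -> x + lag <= y)
                /\ gapped lag bs'
  end.

Section C.
Context (R : realType) d (T : measurableType d) (P : probability T R)
  (xi : int -> T -> R) (u : R).
Hypothesis mxi : forall z, measurable_fun setT (xi z).
Variables (al : R) (lag : nat).
Hypothesis lag0 : (0 < lag)%N.
Hypothesis al0 : 0 <= al.
Hypothesis hD : forall (i j : seq int),
        i != [::] -> j != [::] ->
        sorted (fun x y : int => x < y) i -> sorted (fun x y : int => x < y) j ->
        last 0 i < head 0 j -> last 0 i + lag%:Z <= head 0 j ->
        `| Fjoint P xi (i ++ j) u - Fjoint P xi i u * Fjoint P xi j u | <= al.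

Lemma lemC bs : gapped lag bs -> sorted (fun x y : int => x < y) (flatten bs) ->
  `| prR P (max_le xi (flatten bs) u) - \prod_(b <- bs) prR P (max_le xi b u) |
   <= (size bs)%:R * al.
Proof.
elim: bs => [|b bs IH] /=.
  by rewrite big_nil max_le_nil prRT subrr normr0 mul0r lexx.
move=> [gb gbs] srt.
have [sb sr] := cat_sorted2 srt.
set r := flatten bs in gb sr srt IH *.
have t1 : `| prR P (max_le xi (b ++ r) u) - prR P (max_le xi b u) * prR P (max_le xi r u) | <= al.
  clear IH; case: b gb sb srt => [|x b'] gb sb srt.
    by rewrite max_le_nil prRT mul1r subrr normr0.
  case: r gb sr srt => [|y r'] gb sr srt.
    by rewrite cats0 max_le_nil prRT mulr1 subrr normr0.
  have hg : last 0 (x :: b') + lag%:Z <= head 0 (y :: r').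
    by apply: gb => /=; [exact: mem_last | exact: mem_head].
  apply: hD => //.
  apply: lt_le_trans hg; rewrite ltrDl ltz_nat //.
rewrite big_cons.
have /andP[F0 F1] := F01 P u mxi b.
have E : prR P (max_le xi (b ++ r) u) - prR P (max_le xi b u) * \prod_(j <- bs) prR P (max_le xi j u)
  = (prR P (max_le xi (b ++ r) u) - prR P (max_le xi b u) * prR P (max_le xi r u))
    + prR P (max_le xi b u) * (prR P (max_le xi r u) - \prod_(j <- bs) prR P (max_le xi j u)) by ring.
rewrite E; apply: le_trans (ler_normD _ _) _; rewrite normrM (ger0_norm F0).
have := IH gbs sr; have := normr_ge0 (prR P (max_le xi r u) - \prod_(j <- bs) prR P (max_le xi j u)).
rewrite -addn1 natrD mulrDl mul1r; nra.
Qed.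
End C.
Lemma flat_blocks (s : seq int) r m : (size s <= m * r)%N ->
  flatten [seq take r (drop (j * r) s) | j <- iota 0 m] = s.
Proof.
elim: m s => [|m IH] s hs.
  by move: hs; rewrite mul0n leqn0 => /nilP ->.
rewrite /= drop0 -[in RHS](cat_take_drop r s); congr cat.
rewrite -[in RHS](IH (drop r s)); last by rewrite size_drop leq_subLR -mulSn.
rewrite (iotaDl 1 0) -map_comp; congr flatten; apply: eq_map => j /=.
by rewrite drop_drop mulSn addnC.
Qed.

Lemma nth_gap (s : seq int) p q : sorted (fun x y : int => x < y) s ->
  (p <= q)%N -> (q < size s)%N -> nth 0 s p + (q - p)%:Z <= nth 0 s q.
Proof.
move=> srt; elim: q => [|q IH] pq qs.
  by move: pq; rewrite leqn0 => /eqP ->; rewrite subnn addr0.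
case: (ltngtP p q.+1) pq => // [pq|<-] _; last by rewrite subnn addr0.
have h1 := IH pq (ltnW qs).
have h2 : nth 0 s q < nth 0 s q.+1.
  by apply: (sorted_ltn_nth lt_trans) => //; rewrite inE ?(ltnW qs).
rewrite subSn // -addn1 PoszD addrA.
apply: le_trans (_ : nth 0 s q + 1 <= _); first by rewrite lerD2r.
by rewrite -ltzD1 ltrD2r.
Qed.

Lemma gapped_iota (f : nat -> seq int) lag m c :
  (forall j j' x y, (m <= j)%N -> (j < j')%N -> (j' < m + c)%N ->
     x \in f j -> y \in f j' -> x + lag <= y) ->
  gapped lag [seq f j | j <- iota m c].
Proof.
elim: c m => [|c IH] m H //=; split.
  move=> x y xf /flatten_mapP [j']; rewrite mem_iota => /andP[h1 h2] yf.
  apply: (H m j') => //; last by move: h2; rewrite addSn addnS.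
apply: IH => j j' x y h1 h2 h3; apply: H => //; first exact: ltnW.
by rewrite addnS -addSn.
Qed.

Lemma size_flat_le (T : Type) (f : nat -> seq T) c (s : seq nat) :
  (forall j, size (f j) <= c)%N -> (size (flatten [seq f j | j <- s]) <= size s * c)%N.
Proof.
move=> H; elim: s => [|j s IH] //=.
by rewrite size_cat mulSn leq_add.
Qed.

Lemma count_uniq_le (s L : seq int) : uniq s -> (count (mem L) s <= size L)%N.
Proof.
move=> us; rewrite -size_filter; apply: uniq_leq_size; first exact: filter_uniq.
by move=> x; rewrite mem_filter => /andP[].
Qed.

Section Blocks.
Context (T : Type) (X : nat -> T -> int) (k l : nat -> nat) (n : nat) (w : T).

Let s := range_seq X n w.
Let r := rlen k n.
Let K := Kn X k n w.
Let L := stripes X k l n w.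

Lemma range_sorted : sorted (fun x y : int => x < y) s.
Proof.
have : sorted <%O s.
  rewrite lt_sorted_uniq_le sort_uniq undup_uniq /=.
  have := @sort_sorted _ (fun x y : int => x <= y) (fun x y => le_total x y)
    (undup [seq walkS X m w | m <- iota 1 n]).
  by [].
by [].
Qed.

Lemma range_uniq : uniq s.
Proof. by rewrite /s /range_seq sort_uniq undup_uniq. Qed.

Lemma range_size : (size s <= n)%N.
Proof.
rewrite /s /range_seq size_sort; apply: leq_trans (size_undup _) _.
by rewrite size_map size_iota.
Qed.

Lemma r_gt0 : (0 < r)%N.
Proof. by rewrite /r /rlen addn1. Qed.

Lemma range_flat : flatten [seq block X k n w j | j <- iota 0 K] = s.
Proof.
apply: flat_blocks; rewrite /K /Kn -/s -/r.
have := r_gt0; have := leq_trunc_div (size s) r; have := ltn_ceil (size s) r_gt0.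
rewrite mulnDl mul1n; lia.
Qed.

Lemma K_le_k : (2 <= k n)%N -> (K <= k n)%N.
Proof.
move=> k2; rewrite /K /Kn -/s -/r.
have Hd : (size s %/ r <= n %/ r)%N by apply: leq_div2r; exact: range_size.
suff : (n %/ r < (k n).-1)%N by move: Hd; lia.
rewrite /r /rlen ltn_divLR; last by rewrite addn1.
have := ltn_pmod n (_ : 0 < (k n).-1)%N; have := divn_eq n (k n).-1.
move=> E; move=> /(_ ltac:(lia)) M.
rewrite [X in (X < _)%N]E; nia.
Qed.

Lemma size_stripe j : (size (stripe X k l n w j) <= l n)%N.
Proof.
rewrite /stripe; case: ifP => _ //.
by rewrite size_drop; lia.
Qed.

Lemma size_stripes : (size L <= K * l n)%N.
Proof.
rewrite /L /stripes -/K.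
have := @size_flat_le _ (fun j => stripe X k l n w j) (l n) (iota 0 K) size_stripe.
by rewrite size_iota.
Qed.

Lemma filter_flat (P : pred int) (bs : seq (seq int)) :
  [seq z <- flatten bs | P z] = flatten [seq [seq z <- b | P z] | b <- bs].
Proof. by elim: bs => //= b bs IH; rewrite filter_cat IH. Qed.

Lemma size_block j : size (block X k n w j) = minn r (size s - j * r).
Proof. by rewrite /block size_take size_drop /minn; case: ifP => //. Qed.

Lemma nth_block j i : (i < size (block X k n w j))%N ->
  nth 0 (block X k n w j) i = nth 0 s (j * r + i).
Proof.
move=> iB; have : (i < r)%N by move: iB; rewrite size_block leq_min => /andP[].
by move=> ir; rewrite /block nth_take // nth_drop.
Qed.

Lemma mem_block x j : x \in block X k n w j ->
  exists2 i, (i < size (block X k n w j))%N & x = nth 0 (block X k n w j) i.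
Proof.
by move=> xB; exists (index x (block X k n w j)); rewrite ?index_mem ?nth_index.
Qed.

Lemma blocks_gap j j' x y : (j < j')%N -> (j' < K)%N ->
  x \in [seq z <- block X k n w j | z \notin L] ->
  y \in [seq z <- block X k n w j' | z \notin L] -> x + (l n)%:Z <= y.
Proof.
move=> jj' j'K; rewrite !mem_filter => /andP[xL xB] /andP[_ yB].
have xS : x \notin stripe X k l n w j.
  apply: contra xL => xS; rewrite /L /stripes; apply/flatten_mapP.
  by exists j => //; rewrite mem_iota /= add0n; apply: ltn_trans j'K.
have [i iB xE] := mem_block xB.
have [i' iB' yE] := mem_block yB.
have il : (i + l n < size (block X k n w j))%N.
  move: xS; rewrite /stripe ifT; last by rewrite (leq_ltn_trans jj').
  case: (ltnP (i + l n) (size (block X k n w j))) => // H; apply: contraNT => _.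
  set B := block X k n w j in iB H xE *.
  have -> : x = nth 0 (drop (size B - l n) B) (i - (size B - l n)).
    by rewrite nth_drop subnKC ?xE //; lia.
  apply: mem_nth; rewrite size_drop.
  change (i - (size B - l n) < size B - (size B - l n))%N; lia.
rewrite nth_block // in xE; rewrite nth_block // in yE.
have Hb := size_block j; have Hb' := size_block j'.
have hr : (size (block X k n w j) <= r)%N by rewrite Hb geq_minl.
have q_lt : (j' * r + i' < size s)%N.
  by move: iB'; rewrite Hb' leq_min -ltn_subRL => /andP[_].
have pq : (j * r + i + l n <= j' * r + i')%N.
  have : (j.+1 * r <= j' * r)%N by rewrite leq_mul2r jj' orbT.
  rewrite mulSn; lia.
have := nth_gap range_sorted (_ : j * r + i <= j' * r + i')%N q_lt.
rewrite -xE -yE => /(_ ltac:(lia)) H.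
apply: le_trans H; rewrite lerD2l lez_nat; lia.
Qed.

Lemma blocks_gapped :
  gapped (l n) [seq [seq z <- block X k n w j | z \notin L] | j <- iota 0 K].
Proof.
apply: gapped_iota => j j' x y _ jj' j'K; apply: blocks_gap => //.
Qed.

Lemma filter_range_flat :
  [seq z <- s | z \notin L] =
  flatten [seq [seq z <- block X k n w j | z \notin L] | j <- iota 0 K].
Proof. by rewrite -range_flat filter_flat -map_comp. Qed.

End Blocks.
Lemma squeeze0 (R : realType) (G : nat -> Prop) (f g : nat -> R) :
  (\forall n \near \oo, G n) -> (forall n, G n -> `|f n| <= g n) ->
  g @ \oo --> (0 : R) -> f @ \oo --> (0 : R).
Proof.
move=> HG Hfg g0.
apply: (@squeeze_cvgr _ _ _ _ (fun n => - g n) g f).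
- by apply: filterS HG => n /Hfg; rewrite ler_norml.
- by rewrite -oppr0; exact: cvgN.
- exact: g0.
Qed.

Lemma prod_ord_iota (R : realType) (f : nat -> R) K :
  \prod_(j < K) f j = \prod_(j <- iota 0 K) f j.
Proof. by rewrite -(big_mkord xpredT) /index_iota subn0. Qed.

Theorem lemma1 (R : realType) (d1 d2 : measure_display)
  (Om1 : measurableType d1) (Om2 : measurableType d2)
  (P1 : probability Om1 R) (P2 : probability Om2 R)
  (X : nat -> Om1 -> int) (a : R)
  (xi : int -> Om2 -> R) (u : nat -> R) (tau : R)
  (alph : nat -> nat -> R) (l k : nat -> nat) :
  iid_int P1 X -> 0 < a < 1 -> domain_of_attraction P1 X a ->
  (forall z, measurable_fun setT (xi z)) -> stationary P2 xi ->
  0 <= tau ->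
  (fun n => n%:R * prR P2 [set w2 | u n < xi 0 w2]) @ \oo --> tau ->
  cond_D P2 xi u alph l -> cond_D' P2 xi u alph l k ->
  {ae P1, forall w,
    [/\ (fun n => prR P2 (max_le xi (range_seq X n w) (u n))
                 - prR P2 (max_le xi [seq z <- range_seq X n w
                                      | z \notin stripes X k l n w] (u n)))
          @ \oo --> (0 : R),
        (fun n => prR P2 (max_le xi [seq z <- range_seq X n w
                                      | z \notin stripes X k l n w] (u n))
                 - \prod_(j < Kn X k n w)
                     prR P2 (max_le xi [seq z <- block X k n w j
                                      | z \notin stripes X k l n w] (u n)))
          @ \oo --> (0 : R) &
        (fun n => \prod_(j < Kn X k n w)
                     prR P2 (max_le xi [seq z <- block X k n w j
                                      | z \notin stripes X k l n w] (u n))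
                 - \prod_(j < Kn X k n w)
                     prR P2 (max_le xi (block X k n w j) (u n)))
          @ \oo --> (0 : R)]}.
Proof.
move=> _ _ _ mxi stat tau0 htau [Dal Dl0 Dl Dbound] [k0 kinf kal kl Dprime].
pose p n := prR P2 [set w2 | u n < xi 0 w2].
have hp : forall n z, prR P2 [set w | u n < xi z w] = p n.
  move=> n z; rewrite /p.
  have mA : forall z0 : int, measurable [set x : R | u n < x].
    move=> _; have := measurable_itv `]u n, +oo[.
    by congr measurable; apply/seteqP; split => x /=; rewrite in_itv /= andbT.
  have := stat [:: 0] (fun _ => [set x : R | u n < x]) z mA.
  move=> E; rewrite /prR.
  have E1 : [set w | u n < xi z w] =
     [set w | forall z0, z0 \in [:: 0] -> [set x : R | u n < x] (xi (z0 + z) w)].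
    apply/seteqP; split => w /=.
      by move=> H z0; rewrite inE => /eqP ->; rewrite add0r.
    by move=> /(_ 0); rewrite inE eqxx add0r => /(_ isT).
  have E2 : [set w | u n < xi 0 w] =
     [set w | forall z0, z0 \in [:: 0] -> [set x : R | u n < x] (xi z0 w)].
    apply/seteqP; split => w /=.
      by move=> H z0; rewrite inE => /eqP ->.
    by move=> /(_ 0); rewrite inE eqxx => /(_ isT).
  by rewrite E1 E2 E.
have p0 : forall n, 0 <= p n by move=> n; exact: prR_ge0.
have al0 : forall n, 0 <= alph n (l n).
  move=> n; apply: le_trans (normr_ge0 _) (Dbound n (l n) [:: 0] [:: (l n)%:Z] _ _ _ _ _ _) => //=.
    by rewrite ltz_nat.
pose G n := [/\ (2 <= k n)%N, (0 < n)%N & (k n <= n)%N].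
have HG : \forall n \near \oo, G n.
  have H1 : \forall n \near \oo, (fun n => (k n * l n)%:R / n%:R) n < (1 : R).
    by apply: (cvgr_lt 0 kl); exact: ltr01.
  have H2 : \forall n \near \oo, (0 < n)%N := nbhs_infty_gt 0.
  have H12 : \forall n \near \oo, ((k n * l n)%:R / n%:R < (1:R)) /\ (0 < n)%N.
    by apply: filterS2 H1 H2 => n h1 h2; split.
  apply: filterS2 (kinf 2%N) H12 => n k2 [H n0]; split => //.
  move: H; rewrite ltr_pdivrMr ?ltr0n // mul1r ltr_nat => H.
  apply: leq_trans (ltnW H); rewrite leq_pmulr //.
pose g1 n := (k n * l n)%:R / n%:R * (n%:R * p n).
have g1c : g1 @ \oo --> (0 : R).
  by rewrite -(mul0r tau); apply: cvgM.
pose g2 n := n%:R ^+ 2 / (k n)%:R * alph n (l n).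
have hpx : forall n z, prR P2 [set w | u n < xi z w] = p n := hp.
apply: aeW => w.
have Hg1 : forall n, G n ->
    (size (stripes X k l n w))%:R * p n <= g1 n.
  move=> n [k2 n0 kn]; rewrite /g1.
  have -> : (k n * l n)%:R / n%:R * (n%:R * p n) = (k n * l n)%:R * p n.
    by field; rewrite pnatr_eq0 -lt0n.
  apply: ler_wpM2r => //; rewrite ler_nat.
  apply: leq_trans (size_stripes X k l n w) _.
  by rewrite leq_mul2r K_le_k ?orbT.
split.
- apply: (squeeze0 HG) g1c => n Gn; apply: le_trans (Hg1 n Gn).
  have /andP[h1 h2] := lemA mxi (hp n) (stripes X k l n w) (range_seq X n w).
  rewrite distrC ger0_norm //; apply: le_trans h2 _.
  apply: ler_wpM2r => //; rewrite ler_nat count_uniq_le //; exact: range_uniq.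
- apply: (squeeze0 HG) kal => n [k2 n0 kn].
  rewrite (prod_ord_iota (fun j => prR P2 (max_le xi
     [seq z <- block X k n w j | z \notin stripes X k l n w] (u n)))).
  rewrite -(big_map (fun j => [seq z <- block X k n w j | z \notin stripes X k l n w])
          xpredT (fun b => prR P2 (max_le xi b (u n)))).
  rewrite filter_range_flat.
  have Hc := lemC mxi (Dl0 n) (al0 n) (Dbound n (l n)) (blocks_gapped X k l n w).
  apply: le_trans (Hc _) _.
    rewrite -filter_range_flat; apply: sorted_filter; first exact: lt_trans.
    exact: range_sorted.
  rewrite size_map size_iota.
  have kp : (0 < (k n)%:R :> R) by rewrite ltr0n; apply: leq_trans k2.
  apply: ler_wpM2r => //.
  apply: le_trans (_ : (k n)%:R <= _); first by rewrite ler_nat K_le_k.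
  rewrite ler_pdivlMr // -expr2 lerXn2r ?nnegrE ?ler0n // ler_nat //.
- apply: (squeeze0 HG) g1c => n Gn; apply: le_trans (Hg1 n Gn).
  rewrite (prod_ord_iota (fun j => prR P2 (max_le xi
     [seq z <- block X k n w j | z \notin stripes X k l n w] (u n)))).
  rewrite (prod_ord_iota (fun j => prR P2 (max_le xi (block X k n w j) (u n)))).
  rewrite -(big_map (block X k n w) xpredT
     (fun b => prR P2 (max_le xi [seq z <- b | z \notin stripes X k l n w] (u n)))).
  rewrite -(big_map (block X k n w) xpredT (fun b => prR P2 (max_le xi b (u n)))).
  apply: le_trans (prod_diff _ _ _) _.
  + by move=> b; exact: F01.
  + by move=> b; exact: F01.
  apply: le_trans (_ : \sum_(b <- [seq block X k n w j | j <- iota 0 (Kn X k n w)])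
      (count (mem (stripes X k l n w)) b)%:R * p n <= _).
    apply: ler_sum => b _.
    have /andP[h1 h2] := lemA mxi (hp n) (stripes X k l n w) b.
    by rewrite ger0_norm.
  rewrite -mulr_suml -natr_sum; apply: ler_wpM2r => //; rewrite ler_nat.
  have E : \sum_(b <- [seq block X k n w j | j <- iota 0 (Kn X k n w)])
      count (mem (stripes X k l n w)) b = count (mem (stripes X k l n w)) (range_seq X n w).
    by rewrite -[in RHS](range_flat X k n w) count_flatten sumnE big_map.
  rewrite E; apply: count_uniq_le; exact: range_uniq.
Qed.
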